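(* Let $n\ge1$. The friendship graph $f_n$ is $(a,d)$-distance antimagic for some integers $a$ and $d\ge0$ if and only if $n=1$ or $n=2$.
   Context: The friendship graph $f_n$ is obtained by identifying one vertex from each of $n$ copies of $K_3$: its vertices are $x_0,x_1,\dots,x_{2n}$ and, for $i=1,\dots,n$, the vertices $x_0,x_{2i-1},x_{2i}$ form a triangle; these are all the edges. For a graph $G=(V,E)$ with $v=|V|$ and a bijection $f:V\to\{1,\dots,v\}$, the vertex-weight of $x$ is $w(x)=\sum_{y\in N(x)}f(y)$ with $N(x)$ the set of neighbours of $x$. For integers $a$ and $d\ge0$, $f$ is an $(a,d)$-distance antimagic labeling if the multiset of vertex-weights equals $\{a,a+d,\dots,a+(v-1)d\}$; $G$ is $(a,d)$-distance antimagic if it admits such a labeling. *)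

(* Defs.v *)
From mathcomp Require Import all_boot all_order all_algebra.
Set Implicit Arguments. Unset Strict Implicit. Unset Printing Implicit Defensive.
Import GRing.Theory Num.Theory.

(* Friendship graph f_n on vertices x_0, ..., x_{2n}, represented by 'I_(2n+1)
   (vertex i is x_i).  Edges: x_0 -- x_k for k >= 1, and x_{2i-1} -- x_{2i}. *)
Definition friendship_adj (n : nat) : rel 'I_(2 * n + 1) :=
  fun x y =>
    (x != y) &&
    [|| (val x == 0%N), (val y == 0%N) |
        [&& (0 < val x)%N, (0 < val y)%N & ((val x).-1./2 == (val y).-1./2)]].

(* A labeling of a graph on a finite type V (with v = #|V|) is a bijection
   f : V -> {1,...,v}, encoded as an injective function into nat with values
   in [1, v]. *)
Definition is_labeling (V : finType) (f : V -> nat) : Prop :=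
  injective f /\ (forall x, (1 <= f x <= #|V|)%N).

Definition vertex_weight (V : finType) (adj : rel V) (f : V -> nat) (x : V) : nat :=
  (\sum_(y | adj x y) f y)%N.

Definition is_ad_distance_antimagic_labeling (V : finType) (adj : rel V)
    (a d : int) (f : V -> nat) : Prop :=
  is_labeling f /\
  perm_eq [seq (Posz (vertex_weight adj f x)) | x <- enum V]
          [seq (a + (Posz i) * d)%R | i <- iota 0 #|V|].

Definition is_ad_distance_antimagic (V : finType) (adj : rel V) (a d : int) : Prop :=
  exists f : V -> nat, is_ad_distance_antimagic_labeling adj a d f.

(* Main.v *)
Require Import Defs.
From mathcomp Require Import all_boot all_order all_algebra zify.
Import GRing.Theory Num.Theory.


Lemma sum_iota k m : (2 * \sum_(i <- iota m k) i = k * (2 * m + k - 1))%N.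
Proof.
elim: k m => [|k IH] m; first by rewrite big_nil.
rewrite /= big_cons mulnDr IH; nia.
Qed.

Lemma labels_perm {V : finType} {f : V -> nat} : is_labeling f ->
  perm_eq (map f (enum V)) (iota 1 #|V|).
Proof.
case=> inj rng.
have U1 : uniq (map f (enum V)) by rewrite map_inj_uniq ?enum_uniq.
apply: uniq_perm => //; first exact: iota_uniq.
apply: (uniq_min_size U1 _ _).2.
- move=> x /mapP [y _ ->]; rewrite mem_iota; have := rng y; lia.
- by rewrite size_map size_iota -cardE.
Qed.

Lemma sum_labels {V : finType} {f : V -> nat} : is_labeling f ->
  (2 * \sum_(x : V) f x = #|V| * #|V|.+1)%N.
Proof.
move=> hl.
have -> : (\sum_(x : V) f x = \sum_(i <- map f (enum V)) i)%N.
  by rewrite big_map big_enum.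
rewrite (perm_big _ (labels_perm hl)) sum_iota; lia.
Qed.

Lemma labels_surj {V : finType} {f : V -> nat} : is_labeling f ->
  forall L, (1 <= L <= #|V|)%N -> exists y, f y = L.
Proof.
move=> hl L hL.
have : L \in map f (enum V).
  by rewrite (perm_mem (labels_perm hl)) mem_iota; lia.
by case/mapP => y _ ->; exists y.
Qed.

Lemma valo m (i : 'I_m) : \val i = nat_of_ord i. Proof. by []. Qed.

Lemma adj0 n (h0 : (0 < 2 * n + 1)%N) (z : 'I_(2 * n + 1)) :
  friendship_adj (Ordinal h0) z = (nat_of_ord z != 0%N).
Proof. rewrite /friendship_adj -(inj_eq val_inj) /= ?valo; lia. Qed.

Lemma w0 n (h0 : (0 < 2 * n + 1)%N) (f : 'I_(2 * n + 1) -> nat) :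
  (vertex_weight (@friendship_adj n) f (Ordinal h0) + f (Ordinal h0) = \sum_x f x)%N.
Proof.
rewrite (bigD1 (Ordinal h0)) //= addnC; congr (_ + _)%N.
apply: eq_bigl => z; rewrite adj0 -(inj_eq val_inj) /= ?valo; lia.
Qed.

Lemma wy n (h0 : (0 < 2 * n + 1)%N) (f : 'I_(2 * n + 1) -> nat) (y : 'I_(2 * n + 1)) :
  nat_of_ord y != 0%N -> exists x, vertex_weight (@friendship_adj n) f x = (f (Ordinal h0) + f y)%N.
Proof.
move=> hy.
have E := divn_eq (nat_of_ord y) 2. rewrite modn2 in E.
have hyl := ltn_ord y.
have hp : ((if odd y then (nat_of_ord y).+1 else (nat_of_ord y).-1) < 2 * n + 1)%N.
  by case: ifP => ho; rewrite ho /= in E; lia.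
exists (Ordinal hp).
have A : forall z, friendship_adj (Ordinal hp) z = (z == Ordinal h0) || (z == y).
  move=> z; rewrite /friendship_adj -!(inj_eq val_inj) /= ?valo.
  by case: ifP => ho; rewrite ho /= in E; rewrite -!divn2; lia.
rewrite /vertex_weight (eq_bigl _ _ A) (bigD1 (Ordinal h0)) ?eqxx //=.
congr (_ + _)%N.
rewrite -(big_pred1_eq addn y f); apply: eq_bigl => z.
rewrite -!(inj_eq val_inj) /= ?valo; lia.
Qed.

Lemma forward n (hn : (3 <= n)%N) (a d : int) : (0 <= d)%R ->
  ~ is_ad_distance_antimagic (@friendship_adj n) a d.
Proof.
move=> hd [f [hl hperm]].
have h0 : (0 < 2 * n + 1)%N by rewrite addn1.
have hS := sum_labels hl; rewrite card_ord in hS.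
have hW0 := w0 _ h0 f.
have rng := hl.2; rewrite card_ord in rng.
have memAP : forall x, exists2 i, (i < 2 * n + 1)%N &
    Posz (vertex_weight (@friendship_adj n) f x) = (a + (Posz i) * d)%R.
  move=> x.
  have : Posz (vertex_weight (@friendship_adj n) f x) \in
      [seq (a + (Posz i) * d)%R | i <- iota 0 #|'I_(2 * n + 1)|].
    by rewrite -(perm_mem hperm); apply: map_f; rewrite mem_enum.
  case/mapP => i; rewrite mem_iota card_ord => hi ->; exists i => //; lia.
have hc := rng (Ordinal h0).
set c := f (Ordinal h0) in hW0 hc.
have wL : forall L, (1 <= L <= 2 * n + 1)%N -> L != c ->
    exists2 i, (i < 2 * n + 1)%N & Posz (c + L) = (a + (Posz i) * d)%R.
  move=> L hL hLc.
  have [y hy] := labels_surj hl L ltac:(rewrite card_ord; lia).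
  have hy0 : nat_of_ord y != 0%N.
    apply/eqP => hy0; move/eqP: hLc; apply; rewrite -hy /c.
    by congr f; apply: val_inj.
  have [x hx] := wy _ h0 f _ hy0.
  have [i hi hi'] := memAP x; exists i => //; by rewrite -hi' hx hy.
have [k hk hk'] := memAP (Ordinal h0).
pose L1 := if (3 <= c)%N then 1%N else (2 * n)%N.
have [i hi hi'] := wL L1 ltac:(rewrite /L1; case: ifP; lia) ltac:(rewrite /L1; case: ifP; lia).
have [j hj hj'] := wL L1.+1 ltac:(rewrite /L1; case: ifP; lia) ltac:(rewrite /L1; case: ifP; lia).
pose L0 := if c == 1%N then 2%N else 1%N.
have [l hl0 hl'] := wL L0 ltac:(rewrite /L0; case: ifP; lia) ltac:(rewrite /L0; case: ifP; lia).
have hd1 : (d <= 1)%R.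
  have e : ((Posz j - Posz i) * d = 1)%R by rewrite mulrBl; lia.
  move: e; set x := (Posz j - Posz i)%R => e.
  have [hx|hx] : (x <= 0 \/ 1 <= x)%R by lia.
  - have : (x * d <= 0)%R by rewrite mulr_le0_ge0.
    lia.
  - have : (1 * d <= x * d)%R by rewrite ler_wpM2r.
    lia.
have hSb : (6 * n + 5 <= \sum_x f x)%N by nia.
clear hS.
have [dv|dv] : d = 0%R \/ d = 1%R by lia.
all: rewrite dv ?mulr0 ?mulr1 in hk' hl' hi' hj'.
all: move: hi' hj' hl'; rewrite /L0 /L1; case: ifP; case: ifP; lia.
Qed.

Definition fadj_nat (k j : nat) : bool :=
  (k != j) && [|| k == 0%N, j == 0%N | [&& (0 < k)%N, (0 < j)%N & ((k.-1)./2 == (j.-1)./2)]].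

Lemma map_weights n (F : nat -> nat) :
  [seq Posz (vertex_weight (@friendship_adj n) (fun x : 'I_(2 * n + 1) => F (val x)) x)
     | x <- enum 'I_(2 * n + 1)] =
  [seq Posz (\sum_(0 <= j < 2 * n + 1 | fadj_nat k j) F j)%N | k <- iota 0 (2 * n + 1)].
Proof.
rewrite -val_enum_ord -map_comp; apply: eq_map => x /=.
rewrite /vertex_weight big_mkord; congr Posz; apply: eq_bigl => y //.
Qed.

Lemma ex1 : is_ad_distance_antimagic (@friendship_adj 1) 3%:Z 1%:Z.
Proof.
exists (fun x : 'I_(2 * 1 + 1) => nth 0%N [:: 2; 1; 3]%N (val x)); split; [split|].
- by move=> [[|[|[|m]]] hx] [[|[|[|m']]] hy] //= H; try by apply: val_inj.
- by move=> [[|[|[|m]]] hx]; rewrite card_ord //= ?nth_nil; lia.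
- by rewrite map_weights card_ord unlock; vm_compute.
Qed.

Lemma ex2 : is_ad_distance_antimagic (@friendship_adj 2) 6%:Z 1%:Z.
Proof.
exists (fun x : 'I_(2 * 2 + 1) => nth 0%N [:: 5; 1; 2; 3; 4]%N (val x)); split; [split|].
- by move=> [[|[|[|[|[|m]]]]] hx] [[|[|[|[|[|m']]]]] hy] //= H; try by apply: val_inj.
- by move=> [[|[|[|[|[|m]]]]] hx]; rewrite card_ord //= ?nth_nil; lia.
- by rewrite map_weights card_ord unlock; vm_compute.
Qed.

Theorem mainTheorem15 (n : nat) (hn : (1 <= n)%N) :
  (exists (a d : int), (0 <= d)%R /\ is_ad_distance_antimagic (@friendship_adj n) a d)
  <-> (n = 1%N \/ n = 2%N).
Proof.
split.
- move=> [a [d [hd H]]].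
  have [h3|h3] := leqP 3 n; first by case: (forward _ h3 _ _ hd H).
  lia.
- case=> ->; [exists (Posz 3), (Posz 1); split; [by []|exact: ex1] | exists (Posz 6), (Posz 1); split; [by []|exact: ex2]].
Qed.
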